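(* For nonnegative integers $n,m$, \[\sum_{r=0}^n\sum_{s=0}^m\mathcal{K}_{n,m;r,s}(z,w;q)\,\Phi_{r,s}(1,1;z,w;q)=\Phi_{n,m}(1,1;z,w;q)\] and \[\sum_{r=0}^n\sum_{s=0}^m\mathcal{K}_{n,m;r,s}(z/q,w;q)\,\Phi_{r,s}(u,v;z,w;q)=\Phi_{n,m}(uz,vw;z,w;q).\]
   Context: For $n\in\mathbb{Z}$, $(a;q)_n=(a;q)_\infty/(aq^n;q)_\infty$ ($1/(q;q)_n=0$ for $n<0$), $(a_1,\dots,a_k;q)_n=\prod_i(a_i;q)_n$. For integers $n,m$: $\Phi_{n,m}(z,w;q):=\frac{(zwq;q)_{n+m}}{(q,zq,zwq;q)_n(q,wq,zwq;q)_m}$; \[\mathcal{K}_{n,m;r,s}(z,w;q):=\frac{z^rw^sq^{r^2-rs+s^2}}{(q;q)_{n-r}(q;q)_{m-s}};\] and \[\Phi_{n,m}(u,v;z,w;q):=\Phi_{n,m}(z/q,w;q)-\frac{uz}{(z;q)_2}\Phi_{n-1,m}(zq,w/q;q)+\frac{uvzw^2}{(w,zw;q)_2}\Phi_{n-1,m-1}(z,wq;q).\] (One has $\Phi_{n,m}(1,1;z,w;q)=\Phi_{n,m}(z,w;q)$.) *)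

(* Defs.v *)
From HB Require Import structures.
From mathcomp Require Import all_boot all_order all_algebra.
Set Implicit Arguments. Unset Strict Implicit. Unset Printing Implicit Defensive.
Import Order.TTheory GRing.Theory Num.Theory.
Local Open Scope ring_scope.

Definition qpoch {F : fieldType} (a q : F) (n : nat) : F :=
  \prod_(k < n) (1 - a * q ^+ k).

(* Phi_{n,m}(z,w;q) for integer n, m.  For n < 0 or m < 0 the factor
   1/(q;q)_n resp. 1/(q;q)_m is 0 by the paper's convention, hence Phi = 0. *)
Definition Phi {F : fieldType} (n m : int) (z w q : F) : F :=
  if (0 <= n) && (0 <= m) then
    let N := `|n|%N in let M := `|m|%N in
    qpoch (z * w * q) q (N + M) /
      (qpoch q q N * qpoch (z * q) q N * qpoch (z * w * q) q N *
       (qpoch q q M * qpoch (w * q) q M * qpoch (z * w * q) q M))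
  else 0.

(* K_{n,m;r,s}(z,w;q) = z^r w^s q^(r^2 - r s + s^2) / ((q;q)_{n-r} (q;q)_{m-s}),
   used only for r <= n, s <= m.  Note r^2 + s^2 - r s >= 0, so the nat
   truncated subtraction below is exact. *)
Definition Kc {F : fieldType} (n m r s : nat) (z w q : F) : F :=
  z ^+ r * w ^+ s * q ^+ (r * r + s * s - r * s)%N /
    (qpoch q q (n - r) * qpoch q q (m - s)).

Definition PhiUV {F : fieldType} (n m : nat) (u v z w q : F) : F :=
  Phi n%:Z m%:Z (z / q) w q
  - u * z / qpoch z q 2 * Phi (n%:Z - 1) m%:Z (z * q) (w / q) q
  + u * v * z * w ^+ 2 / (qpoch w q 2 * qpoch (z * w) q 2)
      * Phi (n%:Z - 1) (m%:Z - 1) z (w * q) q.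

(* Main.v *)
Require Import Defs.
From HB Require Import structures.
From mathcomp Require Import all_boot all_order all_algebra.
From mathcomp Require Import ring zify.
From Stdlib Require Import Lia.
Import Order.TTheory GRing.Theory Num.Theory.
Local Open Scope ring_scope.

Section Basic.
Variable F : fieldType.
Implicit Types a q : F.

Lemma qpoch0 a q : qpoch a q 0 = 1.
Proof. by rewrite /qpoch big_ord0. Qed.

Lemma qpochS a q k : qpoch a q k.+1 = qpoch a q k * (1 - a * q ^+ k).
Proof. by rewrite /qpoch big_ord_recr. Qed.

Lemma qpochSl a q k : qpoch a q k.+1 = (1 - a) * qpoch (a * q) q k.
Proof.
rewrite /qpoch big_ord_recl expr0 mulr1; congr (_ * _).
by apply: eq_bigr => i _; rewrite /bump /= exprS mulrA.
Qed.

Lemma qpoch_neq0 a q k : (forall i, (i < k)%N -> 1 - a * q ^+ i != 0) -> qpoch a q k != 0.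
Proof. by move=> h; rewrite /qpoch; apply/prodf_neq0 => i _; apply: h. Qed.

Lemma PhiE (r s : nat) (Z W q : F) : Phi r%:Z s%:Z Z W q =
  qpoch (Z * W * q) q (r + s) /
      (qpoch q q r * qpoch (Z * q) q r * qpoch (Z * W * q) q r *
       (qpoch q q s * qpoch (W * q) q s * qpoch (Z * W * q) q s)).
Proof. by rewrite /Phi. Qed.

Lemma Phi_negl (m : int) (Z W q : F) : Phi (0%:Z - 1) m Z W q = 0.
Proof. by rewrite /Phi. Qed.
Lemma Phi_negr (n : int) (Z W q : F) : Phi n (0%:Z - 1) Z W q = 0.
Proof. by rewrite /Phi andbF. Qed.
Lemma SZ1 (n : nat) : n.+1%:Z - 1 = n%:Z.
Proof. by rewrite -addn1 PoszD addrK. Qed.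

Lemma eS r s : ((r.+1 * r.+1 + s * s - r.+1 * s) + s = (r * r + s * s - r * s) + (2 * r).+1)%N.
Proof.
have h1 : (r * s <= r * r + s * s)%N by nia.
have h2 : (r.+1 * s <= r.+1 * r.+1 + s * s)%N by nia.
nia.
Qed.
End Basic.

Section L.
Variable F : fieldType.
Variables q Z W : F.
Hypothesis hq0 : q != 0.
Hypothesis hq : forall k : nat, 1 - q * q ^+ k != 0.
Hypothesis hZ : forall k : nat, 1 - Z * q * q ^+ k != 0.
Hypothesis hW : forall k : nat, 1 - W * q * q ^+ k != 0.
Hypothesis hZW : forall k : nat, 1 - Z * W * q * q ^+ k != 0.

Lemma Pq k : qpoch q q k != 0. Proof. by apply: qpoch_neq0. Qed.
Lemma PZ k : qpoch (Z * q) q k != 0. Proof. by apply: qpoch_neq0. Qed.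
Lemma PW k : qpoch (W * q) q k != 0. Proof. by apply: qpoch_neq0. Qed.
Lemma PZW k : qpoch (Z * W * q) q k != 0. Proof. by apply: qpoch_neq0. Qed.
Lemma qX k : q ^+ k != 0. Proof. by rewrite expf_neq0. Qed.

Lemma hZW2 a b : 1 - Z * W * q * (q * q ^+ a * q ^+ b) != 0.
Proof. by rewrite -(mulrA q) -exprD -exprS. Qed.

Ltac nz := rewrite ?mulf_neq0 ?invr_eq0 ?hq0 ?Pq ?PZ ?PW ?PZW ?qX ?hq ?hZ ?hW ?hZW ?hZW2 //.

Definition f n m r s := Kc n m r s Z W q * Phi r s Z W q.

Lemma eSq r s : q ^+ (r.+1 * r.+1 + s * s - r.+1 * s) =
   q ^+ (r * r + s * s - r * s) * (q * q ^+ r * q ^+ r) / q ^+ s.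
Proof.
apply: (mulIf (qX s)); rewrite -exprD eS divfK ?qX // exprD; congr (_ * _).
by rewrite exprS mul2n -addnn exprD mulrA.
Qed.

Lemma ratr n m r s : (r < n)%N ->
  f n m r.+1 s * ((1 - q * q ^+ r) * (1 - Z * q * q ^+ r) * (1 - Z * W * q * q ^+ r)) * q ^+ s
  = f n m r s * (Z * (q * q ^+ r * q ^+ r) * (1 - q ^+ (n - r)) * (1 - Z * W * q * q ^+ (r + s))).
Proof.
move=> hr; rewrite /f /Kc !PhiE.
have -> : (n - r = (n - r.+1).+1)%N by lia.
rewrite addSn !qpochS eSq exprSr exprS.
field; nz.
Qed.

Lemma eS2 r s : ((r * r + s.+1 * s.+1 - r * s.+1) + r = (r * r + s * s - r * s) + (2 * s).+1)%N.
Proof.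
have h1 : (r * s <= r * r + s * s)%N by nia.
have h2 : (r * s.+1 <= r * r + s.+1 * s.+1)%N by nia.
nia.
Qed.

Lemma eSq2 r s : q ^+ (r * r + s.+1 * s.+1 - r * s.+1) =
   q ^+ (r * r + s * s - r * s) * (q * q ^+ s * q ^+ s) / q ^+ r.
Proof.
apply: (mulIf (qX r)); rewrite -exprD eS2 divfK ?qX // exprD; congr (_ * _).
by rewrite exprS mul2n -addnn exprD mulrA.
Qed.

Lemma rats n m r s : (s < m)%N ->
  f n m r s.+1 * ((1 - q * q ^+ s) * (1 - W * q * q ^+ s) * (1 - Z * W * q * q ^+ s)) * q ^+ r
  = f n m r s * (W * (q * q ^+ s * q ^+ s) * (1 - q ^+ (m - s)) * (1 - Z * W * q * q ^+ (r + s))).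
Proof.
move=> hs; rewrite /f /Kc !PhiE.
have -> : (m - s = (m - s.+1).+1)%N by lia.
rewrite addnS !qpochS eSq2 exprSr exprS.
field; nz.
Qed.

Lemma fN n m r s : (r <= n)%N -> f n.+1 m r s * (1 - q * q ^+ (n - r)) = f n m r s.
Proof.
move=> hr; rewrite /f /Kc subSn // qpochS; field; nz.
Qed.

Lemma fM n m r s : (s <= m)%N -> f n m.+1 r s * (1 - q * q ^+ (m - s)) = f n m r s.
Proof.
move=> hs; rewrite /f /Kc subSn // qpochS; field; nz.
Qed.

Lemma qB N k : (k <= N)%N -> q ^+ (N - k) = q ^+ N / q ^+ k.
Proof. by move=> h; rewrite exprB // unitfE. Qed.

Lemma ratr' n m r s : (r < n)%N ->
  Z * f n m r s * (1 - q ^+ (n - r)) =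
  f n m r.+1 s * ((1 - q * q ^+ r) * (1 - Z * q * q ^+ r) * (1 - Z * W * q * q ^+ r)) * q ^+ s
   / ((q * q ^+ r * q ^+ r) * (1 - Z * W * q * q ^+ (r + s))).
Proof.
move=> h; apply: (mulIf (_ : (q * q ^+ r * q ^+ r) * (1 - Z * W * q * q ^+ (r + s)) != 0)); first by nz.
by rewrite divfK; [rewrite ratr //; ring | nz].
Qed.

Lemma rats' n m r s : (s < m)%N ->
  W * f n m r s * (1 - q ^+ (m - s)) =
  f n m r s.+1 * ((1 - q * q ^+ s) * (1 - W * q * q ^+ s) * (1 - Z * W * q * q ^+ s)) * q ^+ r
   / ((q * q ^+ s * q ^+ s) * (1 - Z * W * q * q ^+ (r + s))).
Proof.
move=> h; apply: (mulIf (_ : (q * q ^+ s * q ^+ s) * (1 - Z * W * q * q ^+ (r + s)) != 0)); first by nz.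
by rewrite divfK; [rewrite rats //; ring | nz].
Qed.

Definition G N m r s := if r is r'.+1 then
  - Z * q ^+ (N + r') / q ^+ s * (1 - q ^+ (N - r')) * (1 - Z * W * q ^+ (N + s)) * f N m r' s else 0.
Definition H N m r s := if s is s'.+1 then
  Z * W * q ^+ (N + s') / q ^+ r * (1 - q ^+ (m - s')) * (q ^+ N - q ^+ r) * f N m r s' else 0.

Lemma cert N m r s : (r <= N)%N -> (s <= m)%N ->
  (1 - q ^+ N) * (1 - Z * q ^+ N) * (1 - Z * W * q ^+ N) * f N m r s
  - (1 - Z * W * q ^+ (N + m)) * (f N m r s * (1 - q ^+ (N - r)))
  = (G N m r.+1 s - G N m r s) + (H N m r s.+1 - H N m r s).
Proof.
move=> hr hs.
have hG : G N m r s = if r is r'.+1 then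
   - q ^+ (N + r') / q ^+ s * (1 - Z * W * q ^+ (N + s)) *
    (f N m r s * ((1 - q * q ^+ r') * (1 - Z * q * q ^+ r') * (1 - Z * W * q * q ^+ r')) * q ^+ s
   / ((q * q ^+ r' * q ^+ r') * (1 - Z * W * q * q ^+ (r' + s)))) else 0.
  case: r hr => [|r'] hr //=; rewrite -ratr' //; ring.
have hH : H N m r s = if s is s'.+1 then
   q ^+ (N + s') / q ^+ r * (q ^+ N - q ^+ r) * Z *
    (f N m r s * ((1 - q * q ^+ s') * (1 - W * q * q ^+ s') * (1 - Z * W * q * q ^+ s')) * q ^+ r
   / ((q * q ^+ s' * q ^+ s') * (1 - Z * W * q * q ^+ (r + s')))) else 0.
  case: s hs {hG} => [|s'] hs //=; rewrite -rats' //; ring.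
rewrite hG hH /G /H.
case: r hr {hG hH} => [|r'] hr; case: s hs => [|s'] hs /=.
- rewrite ?subn0 ?addn0 ?add0n ?expr0 ?divr1; rewrite exprD; ring.
- rewrite ?subn0 ?addn0 ?add0n ?expr0 ?divr1 (qB _ _ hs) !exprD !exprS; field; nz.
- rewrite ?subn0 ?addn0 ?add0n ?expr0 ?divr1. rewrite (qB _ _ hr). rewrite !exprD !exprS; field; nz.
- rewrite (qB _ _ hr) (qB _ _ hs) !exprD !exprS; field; nz.
Qed.

Definition SS2 N m := \sum_(0 <= r < N.+1) \sum_(0 <= s < m.+1) f N m r s.

Lemma Gend N m s : G N m N.+1 s = 0.
Proof. by rewrite /G subnn expr0 subrr mulr0 !mul0r. Qed.
Lemma Hend N m r : H N m r m.+1 = 0.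
Proof. by rewrite /H subnn expr0 subrr mulr0 !mul0r. Qed.

Lemma keyrel N m :
  (1 - q ^+ N) * (1 - Z * q ^+ N) * (1 - Z * W * q ^+ N) * SS2 N m
  = (1 - Z * W * q ^+ (N + m)) *
    \sum_(0 <= r < N.+1) \sum_(0 <= s < m.+1) (f N m r s * (1 - q ^+ (N - r))).
Proof.
apply/eqP; rewrite -subr_eq0; apply/eqP.
rewrite /SS2 !mulr_sumr -sumrB.
transitivity (\sum_(0 <= r < N.+1) \sum_(0 <= s < m.+1)
   ((G N m r.+1 s - G N m r s) + (H N m r s.+1 - H N m r s))).
  apply: eq_big_nat => r /andP [_ hr]; rewrite ?mulr_sumr -sumrB.
  apply: eq_big_nat => s /andP [_ hs]; apply: cert; lia.
under eq_bigr => r _ do rewrite big_split.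
rewrite big_split exchange_big.
rewrite big1; last first.
  by move=> s _; rewrite (telescope_sumr (fun r => G N m r s)) // Gend /G subrr.
rewrite Monoid.simpm; apply: big1 => r _.
by rewrite (telescope_sumr (fun s => H N m r s)) // Hend /H subrr.
Qed.

Lemma shiftsum n m : \sum_(0 <= r < n.+2) \sum_(0 <= s < m.+1)
   (f n.+1 m r s * (1 - q ^+ (n.+1 - r))) = SS2 n m.
Proof.
rewrite big_nat_recr //= [X in _ + X]big1; last by move=> s _; rewrite subnn expr0 subrr mulr0.
rewrite addr0; apply: eq_big_nat => r /andP [_ hr]; apply: eq_big_nat => s _.
by rewrite subSn ?exprS ?fN //; lia.
Qed.

Lemma PhiS (n m : nat) : Phi n.+1 m Z W q * ((1 - q ^+ n.+1) * (1 - Z * q ^+ n.+1) * (1 - Z * W * q ^+ n.+1))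
  = (1 - Z * W * q ^+ (n.+1 + m)) * Phi n m Z W q.
Proof. rewrite !PhiE addSn !qpochS !exprS; field; nz. Qed.

Lemma cN_neq0 n : (1 - q ^+ n.+1) * (1 - Z * q ^+ n.+1) * (1 - Z * W * q ^+ n.+1) != 0.
Proof. by rewrite !exprS !mulrA; nz. Qed.

Lemma stepL (n m : nat) : SS2 n m = Phi n m Z W q -> SS2 n.+1 m = Phi n.+1 m Z W q.
Proof.
move=> IH; have k := keyrel n.+1 m; rewrite shiftsum IH -PhiS in k.
apply: (mulfI (cN_neq0 n)); rewrite k; ring.
Qed.

Definition H1 M s := if s is s'.+1 then - W * q ^+ (M + s') * (1 - q ^+ (M - s')) * f 0 M 0 s' else 0.

Lemma cert1 M s : (s <= M)%N ->
  (1 - q ^+ M) * (1 - W * q ^+ M) * f 0 M 0 s - f 0 M 0 s * (1 - q ^+ (M - s))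
  = H1 M s.+1 - H1 M s.
Proof.
move=> hs.
have hH : H1 M s = if s is s'.+1 then - q ^+ (M + s') *
    (f 0 M 0 s * ((1 - q * q ^+ s') * (1 - W * q * q ^+ s') * (1 - Z * W * q * q ^+ s')) * q ^+ 0
   / ((q * q ^+ s' * q ^+ s') * (1 - Z * W * q * q ^+ (0 + s')))) else 0.
  case: s hs => [|s'] hs //=; rewrite -rats' //; ring.
rewrite hH /H1; case: s hs {hH} => [|s'] hs /=.
- rewrite ?subn0 ?addn0 ?add0n ?expr0 ?divr1; ring.
- rewrite ?add0n ?expr0 (qB _ _ hs) !exprD !exprS; field; nz.
Qed.

Definition TT M := \sum_(0 <= s < M.+1) f 0 M 0 s.

Lemma keyrel1 M : (1 - q ^+ M) * (1 - W * q ^+ M) * TT M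
  = \sum_(0 <= s < M.+1) (f 0 M 0 s * (1 - q ^+ (M - s))).
Proof.
apply/eqP; rewrite -subr_eq0; apply/eqP.
rewrite /TT mulr_sumr -sumrB.
transitivity (\sum_(0 <= s < M.+1) (H1 M s.+1 - H1 M s)).
  by apply: eq_big_nat => s /andP [_ hs]; apply: cert1; lia.
by rewrite (telescope_sumr (fun s => H1 M s)) // /H1 subnn expr0 subrr mulr0 mul0r subrr.
Qed.

Lemma shiftsum1 m : \sum_(0 <= s < m.+2) (f 0 m.+1 0 s * (1 - q ^+ (m.+1 - s))) = TT m.
Proof.
rewrite big_nat_recr //= subnn expr0 subrr mulr0 addr0.
apply: eq_big_nat => s /andP [_ hs].
by rewrite subSn ?exprS ?fM //; lia.
Qed.

Lemma PhiS1 m : Phi 0 m.+1 Z W q * ((1 - q ^+ m.+1) * (1 - W * q ^+ m.+1)) = Phi 0 m Z W q.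
Proof. rewrite !PhiE !add0n !qpoch0 !qpochS !exprS; field; nz. Qed.

Lemma cM_neq0 m : (1 - q ^+ m.+1) * (1 - W * q ^+ m.+1) != 0.
Proof. by rewrite !exprS !mulrA; nz. Qed.

Lemma baseT m : TT m = Phi 0 m Z W q.
Proof.
elim: m => [|m IH].
  by rewrite /TT big_nat1 /f /Kc !PhiE !qpoch0 !expr0 !mulr1 ?invr1 ?mulr1.
have k := keyrel1 m.+1; rewrite shiftsum1 IH -PhiS1 in k.
by apply: (mulfI (cM_neq0 m)); rewrite k; ring.
Qed.

Lemma Lmain (n m : nat) : \sum_(r < n.+1) \sum_(s < m.+1) Kc n m r s Z W q * Phi r s Z W q = Phi n m Z W q.
Proof.
have -> : \sum_(r < n.+1) \sum_(s < m.+1) Kc n m r s Z W q * Phi r s Z W q = SS2 n m.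
  rewrite /SS2 big_mkord; apply: eq_bigr => r _; by rewrite big_mkord.
elim: n => [|n IH]; last by apply: stepL.
by rewrite /SS2 big_nat1 -baseT.
Qed.
End L.

Section Thm.
Variable F : fieldType.
Variables z w q : F.
Hypothesis hq0 : q != 0.
Hypothesis hq : forall k : nat, 1 - q ^+ k.+1 != 0.
Hypothesis hz : forall k : nat, 1 - z * q ^+ k != 0.
Hypothesis hw : forall k : nat, 1 - w * q ^+ k != 0.
Hypothesis hzw : forall k : nat, 1 - z * w * q ^+ k != 0.

Lemma qpoch2 (a : F) : qpoch a q 2 = (1 - a) * (1 - a * q).
Proof. by rewrite !qpochS qpoch0 expr0 expr1 mulr1 mul1r. Qed.

Lemma qpoch_shift (a : F) k : 1 - a != 0 -> qpoch (a * q) q k = qpoch a q k * (1 - a * q ^+ k) / (1 - a).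
Proof. by move=> h; rewrite -qpochS qpochSl; field. Qed.

Lemma nzq k : 1 - q * q ^+ k != 0. Proof. by rewrite -exprS. Qed.
Lemma e1 k : 1 - z * q ^+ k.+1 = 1 - z * q * q ^+ k. Proof. by rewrite exprS mulrA. Qed.
Lemma e2 k : 1 - z * q ^+ k.+2 = 1 - z * q * q * q ^+ k. Proof. by rewrite !exprS !mulrA. Qed.
Lemma nz1 k : 1 - z * q * q ^+ k != 0. Proof. by rewrite -e1. Qed.
Lemma nz2 k : 1 - z * q * q * q ^+ k != 0. Proof. by rewrite -e2. Qed.
Lemma nw1 k : 1 - w * q * q ^+ k != 0. Proof. by rewrite -mulrA -exprS. Qed.
Lemma nw2 k : 1 - w * q * q * q ^+ k != 0. Proof. by rewrite -!mulrA -!exprS. Qed.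
Lemma nzw1 k : 1 - z * w * q * q ^+ k != 0. Proof. by rewrite -mulrA -exprS. Qed.
Lemma nzw2 k : 1 - z * w * q * q * q ^+ k != 0. Proof. by have := hzw k.+2; rewrite !exprS !mulrA. Qed.
Lemma nz0 : 1 - z != 0. Proof. by have := hz 0; rewrite expr0 mulr1. Qed.
Lemma nw0 : 1 - w != 0. Proof. by have := hw 0; rewrite expr0 mulr1. Qed.
Lemma nzw0 : 1 - z * w != 0. Proof. by have := hzw 0; rewrite expr0 mulr1. Qed.
Lemma nzq1 : 1 - z * q != 0. Proof. by have := nz1 0; rewrite expr0 mulr1. Qed.
Lemma nwq1 : 1 - w * q != 0. Proof. by have := nw1 0; rewrite expr0 mulr1. Qed.
Lemma nzwq1 : 1 - z * w * q != 0. Proof. by have := nzw1 0; rewrite expr0 mulr1. Qed.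

Lemma Pq' k : qpoch q q k != 0. Proof. by apply: qpoch_neq0 => i _; apply: nzq. Qed.
Lemma Pz1 k : qpoch (z * q) q k != 0. Proof. by apply: qpoch_neq0 => i _; apply: nz1. Qed.
Lemma Pw1 k : qpoch (w * q) q k != 0. Proof. by apply: qpoch_neq0 => i _; apply: nw1. Qed.
Lemma Pzw1 k : qpoch (z * w * q) q k != 0. Proof. by apply: qpoch_neq0 => i _; apply: nzw1. Qed.
Lemma Pzw2 k : qpoch (z * w * q * q) q k != 0. Proof. by apply: qpoch_neq0 => i _; apply: nzw2. Qed.
Lemma Pzw0 k : qpoch (z * w) q k != 0. Proof. by apply: qpoch_neq0 => i _; apply: hzw. Qed.

Ltac nzz := rewrite ?mulf_neq0 ?invr_eq0 ?hq0 ?expf_neq0 ?Pq' ?Pz1 ?Pw1 ?Pzw1 ?Pzw2 ?Pzw0 ?nzq ?nz1 ?nz2 ?nw1 ?nw2 ?nzw1 ?nzw2 ?nz0 ?nw0 ?nzw0 ?nzq1 ?nwq1 ?nzwq1 ?hzw ?hz ?hw ?hq //.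

Lemma E (r s : nat) : PhiUV r s 1 1 z w q = Phi r s z w q.
Proof.
have p1 : z / q * w * q = z * w by field.
have p2 : z / q * q = z by field.
have p3 : z * q * (w / q) * q = z * w * q by field.
have p4 : w / q * q = w by field.
have p5 : z * (w * q) * q = z * w * q * q by ring.
rewrite /PhiUV !mul1r.
case: r => [|r'].
  rewrite Phi_negl !mulr0 subr0 addr0 !PhiE !add0n !qpoch0 ?p1 ?p2; field; nzz.
rewrite SZ1.
case: s => [|s'].
  rewrite Phi_negr mulr0 addr0 !PhiE !addn0 !qpoch0 ?p1 ?p2 ?p3 ?p4 (qpoch_shift (z * q)) ?nzq1 //.
  rewrite (@qpochSl _ z) qpoch2 !qpochS; field; nzz.
rewrite SZ1 !PhiE ?p1 ?p2 ?p3 ?p4 ?p5.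
have L1 : qpoch (z * w) q (r'.+1 + s'.+1) = (1 - z * w) * ((1 - z * w * q) * qpoch (z * w * q * q) q (r' + s')).
  by rewrite addSn addnS !qpochSl.
have L2 : qpoch (z * w * q) q (r' + s'.+1) = (1 - z * w * q) * qpoch (z * w * q * q) q (r' + s').
  by rewrite addnS qpochSl.
have L3 : qpoch (z * w * q) q (r'.+1 + s'.+1) =
   (1 - z * w * q) * qpoch (z * w * q * q) q (r' + s') * (1 - z * w * q * q ^+ (r' + s').+1).
  by rewrite addSn addnS qpochS qpochSl.
rewrite L1 L2 L3 (@qpochSl _ z q r') (@qpochSl _ (z * w) q r') (@qpochSl _ w q s') (@qpochSl _ (z * w) q s').
rewrite (qpoch_shift (z * q) r') ?nzq1 // (qpoch_shift (z * w * q) r') ?nzwq1 //.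
rewrite (qpoch_shift (z * w * q) s') ?nzwq1 // (qpoch_shift (w * q) s') ?nwq1 //.
rewrite !qpoch2 !qpochS [q ^+ (r' + s').+1]exprS exprD.
field; nzz.
Qed.

Lemma eSq' r s : q ^+ (r.+1 * r.+1 + s * s - r.+1 * s) =
   q ^+ (r * r + s * s - r * s) * (q * q ^+ r * q ^+ r) / q ^+ s.
Proof.
apply: (mulIf (expf_neq0 s hq0)); rewrite -exprD eS divfK ?expf_neq0 // exprD; congr (_ * _).
by rewrite exprS mul2n -addnn exprD mulrA.
Qed.

Lemma eSS r s : q ^+ (r.+1 * r.+1 + s.+1 * s.+1 - r.+1 * s.+1) =
   q ^+ (r * r + s * s - r * s) * (q * q ^+ r * q ^+ s).
Proof.
have -> : (r.+1 * r.+1 + s.+1 * s.+1 - r.+1 * s.+1 = (r * r + s * s - r * s) + (r + s).+1)%N.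
  have h1 : (r * s <= r * r + s * s)%N by nia.
  have h2 : (r.+1 * s.+1 <= r.+1 * r.+1 + s.+1 * s.+1)%N by nia.
  nia.
by rewrite exprD exprS exprD !mulrA.
Qed.

Lemma KcB n m r s : Kc n.+1 m r.+1 s (z / q) w q = z * Kc n m r s (z * q) (w / q) q.
Proof.
rewrite /Kc subSS eSq'; set E := q ^+ (r * r + s * s - r * s).
rewrite !exprMn ?expr_div_n !exprS !exprVn; field; rewrite ?mulf_neq0 ?expf_neq0 ?Pq' //.
Qed.

Lemma KcC n m r s : Kc n.+1 m.+1 r.+1 s.+1 (z / q) w q = z * w * Kc n m r s z (w * q) q.
Proof.
rewrite /Kc !subSS eSS; set E := q ^+ (r * r + s * s - r * s).
rewrite !exprMn ?expr_div_n !exprS !exprVn; field; rewrite ?mulf_neq0 ?expf_neq0 ?Pq' //.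
Qed.

Lemma LA n m : \sum_(r < n.+1) \sum_(s < m.+1) Kc n m r s (z / q) w q * Phi r s (z / q) w q = Phi n m (z / q) w q.
Proof.
apply: Lmain => // k; first exact: nzq.
- by rewrite divfK.
- exact: nw1.
- by have -> : z / q * w * q = z * w by field.
Qed.

Lemma LB n m : \sum_(r < n.+1) \sum_(s < m.+1) Kc n m r s (z * q) (w / q) q * Phi r s (z * q) (w / q) q
  = Phi n m (z * q) (w / q) q.
Proof.
apply: Lmain => // k; first exact: nzq.
- exact: nz2.
- by rewrite divfK.
- have -> : z * q * (w / q) * q = z * w * q by field.
  exact: nzw1.
Qed.

Lemma LC n m : \sum_(r < n.+1) \sum_(s < m.+1) Kc n m r s z (w * q) q * Phi r s z (w * q) q
  = Phi n m z (w * q) q.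
Proof.
apply: Lmain => // k; first exact: nzq.
- exact: nz1.
- exact: nw2.
- have -> : z * (w * q) * q = z * w * q * q by ring.
  exact: nzw2.
Qed.

Lemma L0 n m : \sum_(r < n.+1) \sum_(s < m.+1) Kc n m r s z w q * Phi r s z w q = Phi n m z w q.
Proof.
apply: Lmain => // k; first exact: nzq.
- exact: nz1.
- exact: nw1.
- exact: nzw1.
Qed.

Lemma sumB n m : \sum_(r < n.+1) \sum_(s < m.+1)
    Kc n m r s (z / q) w q * Phi (r%:Z - 1) s (z * q) (w / q) q
  = z * Phi (n%:Z - 1) m (z * q) (w / q) q.
Proof.
rewrite big_ord_recl /= big1; last by move=> s _; rewrite Phi_negl mulr0.
rewrite add0r; case: n => [|n].
  by rewrite big_ord0 Phi_negl mulr0.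
rewrite SZ1 -LB mulr_sumr; apply: eq_bigr => r _.
rewrite mulr_sumr; apply: eq_bigr => s _.
by rewrite ?lift0 SZ1 KcB mulrA.
Qed.

Lemma sumC n m : \sum_(r < n.+1) \sum_(s < m.+1)
    Kc n m r s (z / q) w q * Phi (r%:Z - 1) (s%:Z - 1) z (w * q) q
  = z * w * Phi (n%:Z - 1) (m%:Z - 1) z (w * q) q.
Proof.
rewrite big_ord_recl /= big1; last by move=> s _; rewrite Phi_negl mulr0.
rewrite add0r; case: n => [|n].
  by rewrite big_ord0 Phi_negl mulr0.
under eq_bigr => r _ do rewrite big_ord_recl /= Phi_negr mulr0 add0r.
case: m => [|m].
  by rewrite Phi_negr mulr0 big1 // => r _; rewrite big_ord0.
rewrite !SZ1 -LC mulr_sumr; apply: eq_bigr => r _.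
rewrite mulr_sumr; apply: eq_bigr => s _.
by rewrite ?lift0 !SZ1 KcC mulrA.
Qed.

Lemma part1 n m : \sum_(r < n.+1) \sum_(s < m.+1)
        Kc n m r s z w q * PhiUV r s 1 1 z w q = PhiUV n m 1 1 z w q.
Proof.
rewrite E -L0; apply: eq_bigr => r _; apply: eq_bigr => s _; by rewrite E.
Qed.

Lemma part2 (u v : F) n m : \sum_(r < n.+1) \sum_(s < m.+1)
        Kc n m r s (z / q) w q * PhiUV r s u v z w q
      = PhiUV n m (u * z) (v * w) z w q.
Proof.
set c1 := z / qpoch z q 2.
set c2 := z * w ^+ 2 / (qpoch w q 2 * qpoch (z * w) q 2).
have pw : forall r s : nat, Kc n m r s (z / q) w q * PhiUV r s u v z w q =
   Kc n m r s (z / q) w q * Phi r s (z / q) w q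
   - u * c1 * (Kc n m r s (z / q) w q * Phi (r%:Z - 1) s (z * q) (w / q) q)
   + u * v * c2 * (Kc n m r s (z / q) w q * Phi (r%:Z - 1) (s%:Z - 1) z (w * q) q).
  by move=> r s; rewrite /PhiUV /c1 /c2; ring.
under eq_bigr => r _ do under eq_bigr => s _ do rewrite pw.
under eq_bigr => r _ do rewrite big_split /= sumrB -!mulr_sumr.
rewrite big_split /= sumrB -!mulr_sumr LA sumB sumC /PhiUV /c1 /c2; ring.
Qed.
End Thm.

Theorem theorem4p4 (F : fieldType) (z w q u v : F)
  (hq0 : q != 0)
  (hq : forall k : nat, 1 - q ^+ k.+1 != 0)
  (hz : forall k : nat, 1 - z * q ^+ k != 0)
  (hw : forall k : nat, 1 - w * q ^+ k != 0)
  (hzw : forall k : nat, 1 - z * w * q ^+ k != 0) :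
  forall n m : nat,
    \sum_(r < n.+1) \sum_(s < m.+1)
        Kc n m r s z w q * PhiUV r s 1 1 z w q = PhiUV n m 1 1 z w q
    /\
    \sum_(r < n.+1) \sum_(s < m.+1)
        Kc n m r s (z / q) w q * PhiUV r s u v z w q
      = PhiUV n m (u * z) (v * w) z w q.
Proof.
move=> n m; split; [exact: part1 | exact: part2].
Qed.
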